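(* Let $\mathcal F,\mathcal G$ be weighted species with $f_n=[z^n]\mathcal F(z)>0$ and $g_n=[z^n]\mathcal G(z)>0$ for all large $n$. Suppose $\rho:=\rho_{\mathcal G}\in(0,\infty)$ is the radius of convergence of $\mathcal G(z)$, $g_n/g_{n+1}\to\rho$, $\frac1{g_n}\sum_{i+j=n}g_ig_j\to2\mathcal G(\rho)<\infty$, and $f_n/g_n\to\lambda$ for a constant $0<\lambda<\infty$. Let $\mathsf S_n$ be an $n$-sized $\mathcal F\mathcal G$-structure drawn with probability proportional to its weight. Then $$[z^n]\mathcal F(z)\mathcal G(z)\sim\mathcal F(\rho)g_n+\mathcal G(\rho)f_n,$$ and $d_{\mathrm{TV}}(\mathsf S_n,\hat{\mathsf S}_n)\to0$, where $\hat{\mathsf S}_n$ is constructed as follows. Set $p=\mathcal F(\rho)/(\mathcal F(\rho)+\lambda\mathcal G(\rho))$ and flip a coin showing heads with probability $p$. If heads: sample a Boltzmann $\mathcal F$-object $\mathsf F$ with parameter $\rho$; if $|\mathsf F|\le n$ and $g_{n-|\mathsf F|}>0$, let $\hat{\mathsf S}_n$ be the $\mathcal F\mathcal G$-structure with $\mathcal F$-component $\mathsf F$ (placed on a uniformly random $|\mathsf F|$-subset of $\{1,\dots,n\}$) and a $\mathcal G$-component on the remaining $n-|\mathsf F|$ labels drawn with probability proportional to its weight; otherwise set $\hat{\mathsf S}_n=\diamond$ (a placeholder). If tails: symmetrically sample a Boltzmann $\mathcal G$-object $\mathsf G$ with parameter $\rho$, and if $|\mathsf G|\le n$ and $f_{n-|\mathsf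 G|}>0$ complete it with a weight-proportionally drawn $\mathcal F$-component on the remaining $n-|\mathsf G|$ labels; otherwise $\hat{\mathsf S}_n=\diamond$.
   Context: A weighted species $\mathcal F$ assigns to each finite set $U$ a finite set $\mathcal F[U]$ of weighted structures, compatibly with relabelling; $[z^n]\mathcal F(z)$ is $1/n!$ times the total weight of $\mathcal F[\{1,\dots,n\}]$. An $\mathcal F\mathcal G$-structure on $U$ is a pair ($\mathcal F$-structure on $U_1$, $\mathcal G$-structure on $U_2$) with $U=U_1\sqcup U_2$ and product weight. For $\rho>0$ with $\mathcal F(\rho)<\infty$, the Boltzmann distribution with parameter $\rho$ selects $F\in\mathcal F[\{1,\dots,m\}]$ with probability $\omega(F)\rho^m/(m!\,\mathcal F(\rho))$. $d_{\mathrm{TV}}$ denotes total variation distance. *)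

(* Defs.v *)
From Stdlib Require Import Reals ClassicalEpsilon.
From HB Require Import structures.
From mathcomp Require Import all_boot.

Set Implicit Arguments.
Unset Strict Implicit.
Unset Printing Implicit Defensive.

Open Scope R_scope.

(* A weighted species, described through its structures on the canonical
   label sets [n] = {0,...,n-1}: there are [nstr n] structures on [n],
   indexed by 'I_(nstr n), with nonnegative weights [wt n i].
   F-structures on an arbitrary finite set U of labels (here always a subset
   of [n]) are identified with F-structures on [#|U|] by transport along the
   increasing bijection [#|U|] -> U; relabelling compatibility makes weights
   depend only on the transported structure. *)
Record wspecies := WSpecies {
  nstr : nat -> nat;
  wt : forall n : nat, 'I_(nstr n) -> R;
  wt_nonneg : forall (n : nat) (i : 'I_(nstr n)), 0 <= wt i }.

Definition totw (F : wspecies) (n : nat) : R :=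
  \big[Rplus/0]_(i < nstr F n) wt i.

Definition coef (F : wspecies) (n : nat) : R := totw F n / INR (n`!).

(* value of the power series sum a_n x^n (meaningful when it converges) *)
Definition series_val (a : nat -> R) (x : R) : R :=
  epsilon (inhabits 0) (fun l => infinite_sum (fun n => a n * x ^ n) l).

Definition is_radius (a : nat -> R) (rho : R) : Prop :=
  is_lub (fun r => 0 <= r /\ exists M, forall n, Rabs (a n * r ^ n) <= M) rho.

(* FG-structures on [n]: a set U1 of labels carrying the F-component
   (an F-structure on [#|U1|], transported onto U1) and the G-component on
   the complement (a G-structure on [n - #|U1|], transported). *)
Definition prodstr (F G : wspecies) (n : nat) :=
  {U : {set 'I_n} & ('I_(nstr F #|U|) * 'I_(nstr G (n - #|U|)))%type}.

Definition prodwt (F G : wspecies) (n : nat) (s : prodstr F G n) : R :=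
  wt (tagged s).1 * wt (tagged s).2.

Definition prod_totw (F G : wspecies) (n : nat) : R :=
  \big[Rplus/0]_(s : prodstr F G n) prodwt s.

Definition prod_coef (F G : wspecies) (n : nat) : R :=
  prod_totw F G n / INR (n`!).

(* Law of S_n (n-sized FG-structure drawn proportionally to weight), on
   option (prodstr F G n), where None is the placeholder diamond. *)
Definition law_S (F G : wspecies) (n : nat) (x : option (prodstr F G n)) : R :=
  match x with
  | Some s => prodwt s / prod_totw F G n
  | None => 0
  end.

(* Probability that the "heads" branch (Boltzmann F-object with parameter rho,
   placed on a uniform random subset, completed by a weight-proportional
   G-component on the remaining labels) outputs s. *)
Definition heads_prob (F G : wspecies) (rho : R) (n : nat) (s : prodstr F G n) : R :=
  let k := #|tag s| in
  if Rlt_dec 0 (coef G (n - k)) then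
    (wt (tagged s).1 * rho ^ k / (INR (k`!) * series_val (coef F) rho))
    * / INR 'C(n, k)
    * (wt (tagged s).2 / totw G (n - k))
  else 0.

(* Symmetric "tails" branch: Boltzmann G-object of size m = n - k placed on a
   uniform random m-subset (the complement of U1), completed by a
   weight-proportional F-component on the remaining k labels U1. *)
Definition tails_prob (F G : wspecies) (rho : R) (n : nat) (s : prodstr F G n) : R :=
  let k := #|tag s| in
  let m := (n - k)%nat in
  if Rlt_dec 0 (coef F k) then
    (wt (tagged s).2 * rho ^ m / (INR (m`!) * series_val (coef G) rho))
    * / INR 'C(n, m)
    * (wt (tagged s).1 / totw F k)
  else 0.

Definition coin_p (F G : wspecies) (rho lambda : R) : R :=
  series_val (coef F) rho
  / (series_val (coef F) rho + lambda * series_val (coef G) rho).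

Definition law_hatS_some (F G : wspecies) (rho lambda : R) (n : nat)
  (s : prodstr F G n) : R :=
  coin_p F G rho lambda * heads_prob rho s
  + (1 - coin_p F G rho lambda) * tails_prob rho s.

Definition law_hatS (F G : wspecies) (rho lambda : R) (n : nat)
  (x : option (prodstr F G n)) : R :=
  match x with
  | Some s => law_hatS_some rho lambda s
  | None => 1 - \big[Rplus/0]_(s : prodstr F G n) law_hatS_some rho lambda s
  end.

Definition dTV (T : finType) (P Q : T -> R) : R :=
  / 2 * \big[Rplus/0]_(x : T) Rabs (P x - Q x).

(* Main.v *)
Require Import Defs.
From Stdlib Require Import Reals Lra Lia ClassicalEpsilon.
From HB Require Import structures.
From mathcomp Require Import all_boot zify.
Open Scope R_scope.

Lemma Rplus_assoc' : associative Rplus. Proof. move=> x y z; ring. Qed.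
Lemma Rmult_assoc' : associative Rmult. Proof. move=> x y z; ring. Qed.
HB.instance Definition _ := Monoid.isComLaw.Build R 0 Rplus Rplus_assoc' Rplus_comm Rplus_0_l.
HB.instance Definition _ := Monoid.isMulLaw.Build R 0 Rmult Rmult_0_l Rmult_0_r.
HB.instance Definition _ := Monoid.isAddLaw.Build R Rmult Rplus Rmult_plus_distr_r Rmult_plus_distr_l.

Definition sumr (m p : nat) (f : nat -> R) := \big[Rplus/0]_(m <= k < p) f k.

Lemma sumr_f_R0 f n : sum_f_R0 f n = sumr 0 n.+1 f.
Proof.
elim: n => [|n IH]; first by rewrite /sumr big_nat1.
by rewrite /= IH /sumr [in RHS]big_nat_recr.
Qed.

Lemma sumr_scal c m p f : c * sumr m p f = sumr m p (fun k => c * f k).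
Proof. by rewrite /sumr big_distrr. Qed.

Lemma sumr_ext {m p f} g : (forall k, (m <= k < p)%N -> f k = g k) -> sumr m p f = sumr m p g.
Proof. move=> H; rewrite /sumr; apply: eq_big_nat => k Hk; exact: H. Qed.

Lemma sumr_le m p f g : (forall k, (m <= k < p)%N -> f k <= g k) -> sumr m p f <= sumr m p g.
Proof.
move=> H; rewrite /sumr big_nat_cond [X in _ <= X]big_nat_cond.
apply: (big_ind2 (fun x y => x <= y)); first lra.
  move=> *; lra.
move=> i /andP [Hi _]; exact: H.
Qed.

Lemma sumr_nonneg m p f : (forall k, (m <= k < p)%N -> 0 <= f k) -> 0 <= sumr m p f.
Proof.
move=> H; have -> : 0 = sumr m p (fun _ => 0) by rewrite /sumr big1.
exact: sumr_le.
Qed.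

Lemma sumr_split m n p f : (m <= n)%N -> (n <= p)%N -> sumr m p f = sumr m n f + sumr n p f.
Proof. move=> H1 H2; by rewrite /sumr (@big_cat_nat _ _ _ n).   Qed.

Lemma sumr_plus m p f g : sumr m p (fun k => f k + g k) = sumr m p f + sumr m p g.
Proof. by rewrite /sumr big_split. Qed.

Lemma sumr_opp m p f : sumr m p (fun k => - f k) = - sumr m p f.
Proof.
rewrite /sumr; elim/big_rec2: _ => [|i y1 y2 _ ->]; lra.
Qed.

Lemma sumr_minus m p f g : sumr m p (fun k => f k - g k) = sumr m p f - sumr m p g.
Proof. by rewrite /Rminus sumr_plus sumr_opp. Qed.

Lemma sumr_abs m p f : Rabs (sumr m p f) <= sumr m p (fun k => Rabs (f k)).
Proof.
rewrite /sumr; elim/big_rec2: _ => [|i y1 y2 _ H].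
  rewrite Rabs_R0; lra.
apply: Rle_trans (Rabs_triang _ _) _; lra.
Qed.

Lemma sumr_nil m f : sumr m m f = 0.
Proof. by rewrite /sumr big_geq. Qed.

Lemma sumr_recr m p f : (m <= p)%N -> sumr m p.+1 f = sumr m p f + f p.
Proof. move=> H; by rewrite /sumr big_nat_recr. Qed.

Lemma sumr_recl m p f : (m < p)%N -> sumr m p f = f m + sumr m.+1 p f.
Proof. move=> H; by rewrite /sumr big_ltn. Qed.

Lemma sumr_rev n M h : (M <= n)%N ->
  sumr (n - M) n.+1 h = sumr 0 M.+1 (fun j => h (n - j)%N).
Proof.
elim: M => [|M IH] HM.
  by rewrite /sumr subn0 big_nat1 big_nat1 subn0.
rewrite (sumr_recl (n - M.+1)%N); last lia.
have -> : (n - M.+1).+1 = (n - M)%N by lia.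
rewrite IH; last lia.
rewrite (sumr_recr 0 M.+1) //; lra.
Qed.

Lemma sumr_rev_full n h : sumr 0 n.+1 h = sumr 0 n.+1 (fun j => h (n - j)%N).
Proof. by rewrite -sumr_rev // subnn. Qed.

Lemma sumr_three n M h : (M.*2 < n)%N ->
  sumr 0 n.+1 h = sumr 0 M.+1 h + sumr M.+1 (n - M) h
                  + sumr 0 M.+1 (fun j => h (n - j)%N).
Proof.
move=> H; rewrite (sumr_split 0 M.+1); try lia.
rewrite (sumr_split M.+1 (n-M)%N); try lia.
rewrite sumr_rev; last lia. lra.
Qed.

Lemma cv_ev (u v : nat -> R) l N :
  (forall n, (N <= n)%N -> u n = v n) -> Un_cv u l -> Un_cv v l.
Proof.
move=> E H eps Heps; have [N1 HN1] := H eps Heps.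
exists (maxn N N1) => n Hn; rewrite -E; last lia.
apply: HN1; lia.
Qed.

Lemma cv_const c : Un_cv (fun _ => c) c.
Proof. move=> eps He; exists 0%N => n _; rewrite /R_dist Rminus_diag Rabs_R0; lra. Qed.

Lemma cv_shift u l j : Un_cv u l -> Un_cv (fun n => u (n - j)%N) l.
Proof.
move=> H eps He; have [N HN] := H eps He; exists (N + j)%N => n Hn.
apply: HN; lia.
Qed.

Lemma cv_sumr (u : nat -> nat -> R) (l : nat -> R) M :
  (forall k, (k < M)%N -> Un_cv (fun n => u n k) (l k)) ->
  Un_cv (fun n => sumr 0 M (u n)) (sumr 0 M l).
Proof.
elim: M => [|M IH] H.
  rewrite sumr_nil; apply: (Un_cv_ext (fun _ => 0)); last exact: cv_const.
  by move=> n; rewrite sumr_nil.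
rewrite sumr_recr //.
apply: (Un_cv_ext (fun n => sumr 0 M (u n) + u n M)).
  by move=> n; rewrite sumr_recr.
apply: CV_plus; last exact: H.
apply: IH => k Hk; apply: H; lia.
Qed.

Lemma squeeze (u : nat -> R) L :
  (forall eps, 0 < eps -> exists (lo hi : nat -> R) l1 l2 N,
     (forall n, (N <= n)%N -> lo n <= u n <= hi n) /\ Un_cv lo l1 /\ Un_cv hi l2
     /\ L - eps <= l1 /\ l2 <= L + eps) -> Un_cv u L.
Proof.
move=> H eps He.
have He2 : 0 < eps / 2 by lra.
have [lo [hi [l1 [l2 [N [Hb [Hlo [Hhi [H1 H2]]]]]]]]] := H _ He2.
have [N1 HN1] := Hlo _ He2; have [N2 HN2] := Hhi _ He2.
exists (maxn N (maxn N1 N2)) => n Hn.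
have := Hb n ltac:(lia); have := HN1 n ltac:(lia); have := HN2 n ltac:(lia).
rewrite /R_dist; move=> A1 A2 A3.
apply Rabs_def1.
  have := Rabs_def2 _ _ A1; lra.
have := Rabs_def2 _ _ A2; lra.
Qed.

Lemma cv_inv u l : Un_cv u l -> l <> 0 -> Un_cv (fun n => / u n) (/ l).
Proof.
move=> H Hl.
have C : continuity_pt (/ id)%F l.
  apply: continuity_pt_inv => //. apply: derivable_continuous_pt; apply: derivable_pt_id.
exact: (continuity_seq _ _ _ C H).
Qed.

Lemma cv_div u v l1 l2 : Un_cv u l1 -> Un_cv v l2 -> l2 <> 0 ->
  Un_cv (fun n => u n / v n) (l1 / l2).
Proof. move=> H1 H2 H3; apply: CV_mult => //; exact: cv_inv. Qed.

Lemma cv_scal c u l : Un_cv u l -> Un_cv (fun n => c * u n) (c * l).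
Proof. move=> H; apply: CV_mult => //; exact: cv_const. Qed.

Lemma psum_le {x X} : (forall n, 0 <= x n) -> Un_cv (fun n => sumr 0 n.+1 x) X ->
  forall p, sumr 0 p x <= X.
Proof.
move=> H0 H.
have G : Un_growing (fun n => sumr 0 n.+1 x).
  by move=> n; rewrite (sumr_recr 0 n.+1) //; have := H0 n.+1; lra.
have Hg := growing_ineq _ _ G H.
case=> [|p]; last exact: Hg.
have := Hg 0%N; rewrite sumr_nil /sumr big_nat1; have := H0 0%N; lra.
Qed.

Lemma psum_mid {x X} m p : (forall n, 0 <= x n) -> Un_cv (fun n => sumr 0 n.+1 x) X ->
  (m <= p)%N -> sumr m p x <= X - sumr 0 m x.
Proof.
move=> H0 H Hmp; have := psum_le H0 H p; rewrite (sumr_split 0 m p) //; lra.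
Qed.

Definition conv (x y : nat -> R) n := sumr 0 n.+1 (fun k => x k * y (n - k)%N).

Record Hyp (a b : nat -> R) (A B lam : R) : Prop := {
  Ha0 : forall n, 0 <= a n;
  Hb0 : forall n, 0 <= b n;
  Hapos : exists N, forall n, (N <= n)%N -> 0 < a n;
  HA : Un_cv (fun n => sumr 0 n.+1 a) A;
  HB : Un_cv (fun n => sumr 0 n.+1 b) B;
  Hrat : Un_cv (fun n => a n / a n.+1) 1;
  Hconv : Un_cv (fun n => conv a a n / a n) (2 * A);
  Hba : Un_cv (fun n => b n / a n) lam;
  Hlam : 0 < lam }.
Arguments Ha0 {a b A B lam}. Arguments Hb0 {a b A B lam}.
Arguments Hapos {a b A B lam}. Arguments HA {a b A B lam}.
Arguments HB {a b A B lam}. Arguments Hrat {a b A B lam}.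
Arguments Hconv {a b A B lam}. Arguments Hba {a b A B lam}.
Arguments Hlam {a b A B lam}.

Lemma seq_lim0 {x X} : Un_cv (fun n => sumr 0 n.+1 x) X -> Un_cv x 0.
Proof.
move=> H.
apply: (@cv_ev (fun n => sumr 0 n.+1 x - sumr 0 (n - 1).+1 x) _ _ 1%N).
  move=> n Hn; have -> : (n - 1).+1 = n by lia.
  rewrite (sumr_recr 0 n) //; lra.
have -> : 0 = X - X by lra.
apply: CV_minus => //; exact: (@cv_shift (fun n => sumr 0 n.+1 x) _ 1%N).
Qed.

Lemma a_lim0 {a b A B lam} : Hyp a b A B lam -> Un_cv a 0.
Proof. move=> H; exact: (seq_lim0 (HA H)). Qed.

Lemma b_lim0 {a b A B lam} : Hyp a b A B lam -> Un_cv b 0.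
Proof. move=> H; exact: (seq_lim0 (HB H)). Qed.

Lemma A_pos {a b A B lam} : Hyp a b A B lam -> 0 < A.
Proof.
case=> Ha0 _ [N HN] HA *.
have := psum_le Ha0 HA N.+1; rewrite (sumr_recr 0 N) //.
have := @sumr_nonneg 0 N a (fun k _ => Ha0 k); have := HN N (leqnn N); lra.
Qed.

Lemma B_nonneg {a b A B lam} : Hyp a b A B lam -> 0 <= B.
Proof. case=> _ Hb0 _ _ HB *; have := psum_le Hb0 HB 0; rewrite sumr_nil; lra. Qed.

Lemma ratio_shift {a b A B lam} : Hyp a b A B lam ->
  forall j, Un_cv (fun n => a (n - j)%N / a n) 1.
Proof.
move=> H; have [Na HNa] := Hapos H.
elim=> [|j IH].
  apply: (@cv_ev (fun _ => 1) _ _ Na); last exact: cv_const.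
  move=> n Hn; rewrite subn0; have := HNa n Hn => P; field; lra.
apply: (@cv_ev (fun n => a (n - j.+1)%N / a (n - j.+1).+1 * (a (n - j)%N / a n)) _ _
               (Na + j.+1)%N).
  move=> n Hn; have -> : (n - j.+1).+1 = (n - j)%N by lia.
  have P1 := HNa (n - j)%N ltac:(lia); have P2 := HNa n ltac:(lia).
  field; lra.
have -> : 1 = 1 * 1 by lra.
apply: CV_mult => //; exact: (@cv_shift (fun n => a n / a n.+1) _ _ (Hrat H)).
Qed.

Lemma b_le {a b A B lam} : Hyp a b A B lam ->
  exists N, forall k, (N <= k)%N -> b k <= (lam + 1) * a k.
Proof.
move=> H; have [Na HNa] := Hapos H.
have [N1 HN1] := Hba H 1 Rlt_0_1.
exists (maxn Na N1) => k Hk.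
have P := HNa k ltac:(lia); have := HN1 k ltac:(lia); rewrite /R_dist => Q.
have Q' := Rabs_def2 _ _ Q.
have : b k / a k < lam + 1 by lra.
move=> R1; have := Rmult_lt_compat_r (a k) _ _ P R1.
rewrite /Rdiv Rmult_assoc Rinv_l; lra.
Qed.

Lemma sumr_div m p f c : sumr m p f / c = sumr m p (fun k => f k / c).
Proof. rewrite /Rdiv Rmult_comm sumr_scal; apply: sumr_ext => k _; ring. Qed.

Lemma conv_three x y n M : (M.*2 < n)%N ->
  conv x y n = sumr 0 M.+1 (fun k => x k * y (n - k)%N)
             + sumr M.+1 (n - M) (fun k => x k * y (n - k)%N)
             + sumr 0 M.+1 (fun j => x (n - j)%N * y j).
Proof.
move=> Hn; rewrite /conv (@sumr_three n M _ Hn); congr (_ + _).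
apply: sumr_ext => j Hj; have -> : (n - (n - j))%N = j by lia. done.
Qed.

Lemma LE1 {a b A B lam} x M : Hyp a b A B lam ->
  Un_cv (fun n => sumr 0 M (fun k => x k * a (n - k)%N) / a n) (sumr 0 M x).
Proof.
move=> H.
apply: (Un_cv_ext (fun n => sumr 0 M (fun k => x k * (a (n - k)%N / a n)))).
  by move=> n; rewrite sumr_div; apply: sumr_ext => k _; rewrite /Rdiv Rmult_assoc.
rewrite (sumr_ext (fun k => x k * 1)); last by move=> k _; ring.
apply: cv_sumr => k _; apply: cv_scal; exact: (ratio_shift H).
Qed.

Lemma LE2 {a b A B lam} x mu M : Hyp a b A B lam ->
  Un_cv (fun n => x n / a n) mu ->
  Un_cv (fun n => sumr 0 M.+1 (fun j => x (n - j)%N * a j) / a n) (mu * sumr 0 M.+1 a).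
Proof.
move=> H Hx; have [Na HNa] := Hapos H.
apply: (@cv_ev (fun n => sumr 0 M.+1 (fun j => x (n - j)%N / a (n - j)%N * (a (n - j)%N / a n) * a j)) _ _ (Na + M)%N).
  move=> n Hn; rewrite sumr_div; apply: sumr_ext => j Hj.
  have P1 := HNa (n - j)%N ltac:(lia); have P2 := HNa n ltac:(lia).
  field; lra.
rewrite sumr_scal (sumr_ext (fun j => mu * 1 * a j)); last by move=> k _; ring.
apply: cv_sumr => k _; apply: CV_mult; last exact: cv_const.
apply: CV_mult; first exact: (@cv_shift (fun n => x n / a n)).
exact: (ratio_shift H).
Qed.

Lemma mid_lim {a b A B lam} M : Hyp a b A B lam ->
  Un_cv (fun n => sumr M.+1 (n - M) (fun k => a k * a (n - k)%N) / a n)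
        (2 * A - 2 * sumr 0 M.+1 a).
Proof.
move=> H.
apply: (@cv_ev (fun n => conv a a n / a n - sumr 0 M.+1 (fun k => a k * a (n - k)%N) / a n
                 - sumr 0 M.+1 (fun j => a (n - j)%N * a j) / a n) _ _ M.*2.+1).
  move=> n Hn; rewrite (@conv_three _ _ n M Hn) /Rdiv; ring.
have -> : 2 * A - 2 * sumr 0 M.+1 a = 2 * A - sumr 0 M.+1 a - 1 * sumr 0 M.+1 a by ring.
apply: CV_minus; first apply: CV_minus.
- exact: (Hconv H).
- exact: (LE1 _ _ H).
apply: (LE2 a 1 M H).
have [Na HNa] := Hapos H.
apply: (@cv_ev (fun _ => 1) _ _ Na); last exact: cv_const.
move=> n Hn; have := HNa n Hn => P; field; lra.
Qed.

Lemma tail_small {x X} (Hx : forall n, 0 <= x n) :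
  Un_cv (fun n => sumr 0 n.+1 x) X -> forall d, 0 < d ->
  exists M0, forall M, (M0 <= M)%N -> 0 <= X - sumr 0 M.+1 x < d.
Proof.
move=> H d Hd; have [M0 HM] := H d Hd; exists M0 => M HM0.
have := psum_le Hx H M.+1; have := HM M ltac:(lia); rewrite /R_dist => Q.
have := Rabs_def2 _ _ Q; lra.
Qed.

Lemma mid_b_bound {a b A B lam} M Nb n : Hyp a b A B lam ->
  (forall k, (Nb <= k)%N -> b k <= (lam + 1) * a k) -> (Nb <= M)%N ->
  0 <= sumr M.+1 (n - M) (fun k => b k * a (n - k)%N)
    <= (lam + 1) * sumr M.+1 (n - M) (fun k => a k * a (n - k)%N).
Proof.
move=> H Hb HM; split.
  apply: sumr_nonneg => k _; apply: Rmult_le_pos; [exact: (Hb0 H k)|exact: (Ha0 H _)].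
rewrite sumr_scal; apply: sumr_le => k Hk.
have := Hb k ltac:(lia) => Q; have := Ha0 H (n - k)%N => P.
rewrite -Rmult_assoc; apply: Rmult_le_compat_r => //.
Qed.

Lemma conv_lim {a b A B lam} : Hyp a b A B lam ->
  Un_cv (fun n => conv b a n / a n) (B + lam * A).
Proof.
move=> H; apply: squeeze => eps He.
have Hl := Hlam H.
set d := eps / (2 * (lam + 1)).
have Hd : 0 < d by rewrite /d; apply: Rdiv_lt_0_compat; lra.
have [Na HNa] := Hapos H; have [Nb HNb] := b_le H.
have [M1 HM1] := tail_small (Ha0 H) (HA H) d Hd.
have [M2 HM2] := tail_small (Hb0 H) (HB H) d Hd.
set M := maxn (maxn Na Nb) (maxn M1 M2).
have [TA1 TA2] := HM1 M ltac:(lia); have [TB1 TB2] := HM2 M ltac:(lia).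
set SA := sumr 0 M.+1 a in TA1 TA2; set SB := sumr 0 M.+1 b in TB1 TB2.
exists (fun n => sumr 0 M.+1 (fun k => b k * a (n - k)%N) / a n
               + sumr 0 M.+1 (fun j => b (n - j)%N * a j) / a n).
exists (fun n => sumr 0 M.+1 (fun k => b k * a (n - k)%N) / a n
               + sumr 0 M.+1 (fun j => b (n - j)%N * a j) / a n
               + (lam + 1) * (sumr M.+1 (n - M) (fun k => a k * a (n - k)%N) / a n)).
exists (SB + lam * SA), (SB + lam * SA + (lam + 1) * (2 * A - 2 * SA)), (maxn M.*2.+1 Na).
split.
  move=> n Hn; rewrite (@conv_three _ _ n M ltac:(lia)).
  have P := HNa n ltac:(lia).
  have [Q1 Q2] := @mid_b_bound a b A B lam M Nb n H HNb ltac:(lia).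
  have R1 : 0 <= sumr M.+1 (n - M) (fun k => b k * a (n - k)%N) / a n.
    apply: Rmult_le_pos => //; left; exact: Rinv_0_lt_compat.
  have R2 : sumr M.+1 (n - M) (fun k => b k * a (n - k)%N) / a n <=
            (lam + 1) * (sumr M.+1 (n - M) (fun k => a k * a (n - k)%N) / a n).
    rewrite /Rdiv -Rmult_assoc; apply: Rmult_le_compat_r => //.
    by left; apply: Rinv_0_lt_compat.
  rewrite /Rdiv !Rmult_plus_distr_r -/(Rdiv _ (a n)); lra.
split.
  apply: CV_plus; first exact: (LE1 b M.+1 H).
  exact: (LE2 b lam M H (Hba H)).
split.
  apply: CV_plus; first apply: CV_plus; first exact: (LE1 b M.+1 H).
    exact: (LE2 b lam M H (Hba H)).
  apply: cv_scal; exact: (mid_lim M H).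
have E : d * (2 * (lam + 1)) = eps by rewrite /d; field; lra.
have F1 : lam * (A - SA) <= lam * d by apply: Rmult_le_compat_l; lra.
have F2 : 0 <= lam * (A - SA) by apply: Rmult_le_pos; lra.
have F3 : (lam + 1) * (2 * A - 2 * SA) <= (lam + 1) * (2 * d) by apply: Rmult_le_compat_l; lra.
split; nra.
Qed.

Lemma cv_sumr0 (u : nat -> nat -> R) M :
  (forall k, (k < M)%N -> Un_cv (fun n => u n k) 0) ->
  Un_cv (fun n => sumr 0 M (u n)) 0.
Proof.
move=> H; have -> : 0 = sumr 0 M (fun _ => 0) by rewrite /sumr big1.
exact: cv_sumr.
Qed.

Lemma abs_le_sum x y : 0 <= x -> 0 <= y -> Rabs (x - y) <= x + y.
Proof. move=> Hx Hy; apply: Rabs_le; lra. Qed.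

Lemma rev_mid_bound {a b A B lam} M n : Hyp a b A B lam -> (M.*2 < n)%N ->
  sumr M.+1 (n - M) (fun k => a (n - k)%N) <= A - sumr 0 M.+1 a.
Proof.
move=> H Hn.
have E := @sumr_three n M (fun k => a (n - k)%N) Hn.
rewrite -sumr_rev_full in E.
have E2 : sumr 0 M.+1 (fun j => a (n - (n - j))%N) = sumr 0 M.+1 a.
  by apply: sumr_ext => j Hj; congr a; lia.
rewrite E2 in E.
have := psum_le (Ha0 H) (HA H) n.+1.
have := @sumr_nonneg 0 M.+1 (fun k => a (n - k)%N) (fun k _ => Ha0 H _).
lra.
Qed.

Lemma tv_lim {a b A B lam} : Hyp a b A B lam ->
  Un_cv (fun n => sumr 0 n.+1 (fun k => Rabs (b k * a (n - k)%N / conv b a n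
                   - (b k + lam * a (n - k)%N) / (B + lam * A)))) 0.
Proof.
move=> H; set D := B + lam * A.
have Hl := Hlam H; have HAp := A_pos H; have HB0 := B_nonneg H.
have HD : 0 < D by rewrite /D; nra.
have [Na HNa] := Hapos H; have [Nb HNb] := b_le H.
have HC := conv_lim H; rewrite -/D in HC.
have [Nc HNc] := HC (D / 2) ltac:(lra).
have Cpos : forall n, (maxn Na Nc <= n)%N -> 0 < conv b a n / a n /\ 0 < conv b a n.
  move=> n Hn; have := HNc n ltac:(lia); rewrite /R_dist => Q.
  have Q' := Rabs_def2 _ _ Q; have P := HNa n ltac:(lia).
  have C1 : 0 < conv b a n / a n by lra.
  split => //.
  have -> : conv b a n = conv b a n / a n * a n by field; lra.
  exact: Rmult_lt_0_compat.
apply: squeeze => eps He.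
set d := eps * D / (3 * (lam + 1)).
have Hd : 0 < d by rewrite /d; apply: Rdiv_lt_0_compat; nra.
have [M1 HM1] := tail_small (Ha0 H) (HA H) d Hd.
have [M2 HM2] := tail_small (Hb0 H) (HB H) d Hd.
set M := maxn (maxn Na Nb) (maxn M1 M2).
have [TA1 TA2] := HM1 M ltac:(lia); have [TB1 TB2] := HM2 M ltac:(lia).
set SA := sumr 0 M.+1 a in TA1 TA2; set SB := sumr 0 M.+1 b in TB1 TB2.
set P1 := fun n => sumr 0 M.+1 (fun k => Rabs (b k * a (n - k)%N / conv b a n
                   - (b k + lam * a (n - k)%N) / D)).
set P3 := fun n => sumr 0 M.+1 (fun j => Rabs (b (n - j)%N * a j / conv b a n
                   - (b (n - j)%N + lam * a j) / D)).
set Q := fun n => (sumr M.+1 (n - M) (fun k => a k * a (n - k)%N) / a n) / (conv b a n / a n).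
exists (fun _ => 0), (fun n => P1 n + P3 n + (lam + 1) * Q n + ((B - SB) + lam * (A - SA)) / D).
exists 0, (0 + 0 + (lam + 1) * ((2 * A - 2 * SA) / D) + ((B - SB) + lam * (A - SA)) / D).
exists (maxn (maxn M.*2.+1 Na) Nc).
split.
  move=> n Hn.
  have P := HNa n ltac:(lia); have [_ Cp] := Cpos n ltac:(lia).
  split; first by apply: sumr_nonneg => k _; apply: Rabs_pos.
  rewrite (@sumr_three n M _ ltac:(lia)).
  have E3 : sumr 0 M.+1 (fun j => Rabs (b (n - j)%N * a (n - (n - j))%N / conv b a n
                   - (b (n - j)%N + lam * a (n - (n - j))%N) / D)) = P3 n.
    by apply: sumr_ext => j Hj; have -> : (n - (n - j))%N = j by lia.
  rewrite E3 -/(P1 n).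
  set x := fun k => b k * a (n - k)%N / conv b a n.
  set y := fun k => (b k + lam * a (n - k)%N) / D.
  have Hx : forall k, 0 <= x k.
    move=> k; rewrite /x /Rdiv; apply: Rmult_le_pos; last by left; apply: Rinv_0_lt_compat.
    apply: Rmult_le_pos; [exact: (Hb0 H) | exact: (Ha0 H)].
  have Hy : forall k, 0 <= y k.
    move=> k; rewrite /y /Rdiv; apply: Rmult_le_pos; last by left; apply: Rinv_0_lt_compat.
    have := Hb0 H k; have := Ha0 H (n - k)%N; nra.
  have S1 : sumr M.+1 (n - M) (fun k => Rabs (x k - y k))
            <= sumr M.+1 (n - M) x + sumr M.+1 (n - M) y.
    rewrite -sumr_plus; apply: sumr_le => k _; exact: abs_le_sum.
  have [_ Q2] := @mid_b_bound a b A B lam M Nb n H HNb ltac:(lia).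
  have S2 : sumr M.+1 (n - M) x <= (lam + 1) * Q n.
    have -> : Q n = sumr M.+1 (n - M) (fun k => a k * a (n - k)%N) / conv b a n.
      by rewrite /Q; field; lra.
    rewrite /x -sumr_div /Rdiv -Rmult_assoc; apply: Rmult_le_compat_r => //.
    by left; apply: Rinv_0_lt_compat.
  have S3 : sumr M.+1 (n - M) y <= ((B - SB) + lam * (A - SA)) / D.
    rewrite /y -sumr_div sumr_plus -sumr_scal; apply: Rmult_le_compat_r.
      by left; apply: Rinv_0_lt_compat.
    have := @psum_mid b B M.+1 (n - M)%N (Hb0 H) (HB H) ltac:(lia).
    have := @rev_mid_bound a b A B lam M n H ltac:(lia).
    rewrite -/SB -/SA => U1 U2.
    have : lam * sumr M.+1 (n - M) (fun k => a (n - k)%N) <= lam * (A - SA).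
      by apply: Rmult_le_compat_l; lra.
    lra.
  have -> : sumr M.+1 (n - M) (fun k => Rabs (b k * a (n - k)%N / conv b a n
              - (b k + lam * a (n - k)%N) / D)) = sumr M.+1 (n - M) (fun k => Rabs (x k - y k)) by [].
  lra.
split; first exact: cv_const.
split.
  apply: CV_plus; last exact: cv_const.
  apply: CV_plus; last first.
    apply: cv_scal; apply: cv_div; [exact: (mid_lim M H)| exact: HC | lra].
  apply: CV_plus.
  - apply: cv_sumr0 => k _.
    apply: (@cv_ev (fun n => Rabs (b k * ((a (n - k)%N / a n) / (conv b a n / a n))
                   - (b k + lam * a (n - k)%N) / D)) _ _ (maxn Na Nc)).
      move=> n Hn; have P := HNa n ltac:(lia); have [_ Cp] := Cpos n ltac:(lia).
      congr Rabs; field; lra.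
    have -> : 0 = Rabs (b k * (1 / D) - (b k + lam * 0) * / D).
      rewrite (_ : b k * (1 / D) - (b k + lam * 0) * / D = 0) ?Rabs_R0 //; field; lra.
    apply: cv_cvabs; apply: CV_minus.
      apply: cv_scal; apply: cv_div; [exact: (ratio_shift H) | exact: HC | lra].
    apply: CV_mult; last exact: cv_const.
    apply: CV_plus; first exact: cv_const.
    apply: cv_scal; exact: (@cv_shift a 0 k (a_lim0 H)).
  - apply: cv_sumr0 => j _.
    apply: (@cv_ev (fun n => Rabs ((b (n - j)%N / a (n - j)%N) * (a (n - j)%N / a n)
                      / (conv b a n / a n) * a j
                   - (b (n - j)%N + lam * a j) / D)) _ _ (Na + j + Nc)%N).
      move=> n Hn; have P := HNa n ltac:(lia); have [_ Cp] := Cpos n ltac:(lia).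
      have P' := HNa (n - j)%N ltac:(lia).
      congr Rabs; field; lra.
    have -> : 0 = Rabs (lam * 1 / D * a j - (0 + lam * a j) * / D).
      rewrite (_ : lam * 1 / D * a j - (0 + lam * a j) * / D = 0) ?Rabs_R0 //; field; lra.
    apply: cv_cvabs; apply: CV_minus.
      apply: CV_mult; last exact: cv_const.
      apply: cv_div; [|exact: HC|lra].
      apply: CV_mult; last exact: (ratio_shift H).
      exact: (@cv_shift (fun n => b n / a n) _ j (Hba H)).
    apply: CV_mult; last exact: cv_const.
    apply: CV_plus; last exact: cv_const.
    exact: (@cv_shift b 0 j (b_lim0 H)).
split; first lra.
have E : 3 * (lam + 1) * d = eps * D by rewrite /d; field; lra.
have F1 : lam * (A - SA) <= lam * d by apply: Rmult_le_compat_l; lra.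
have F3 : (lam + 1) * (2 * A - 2 * SA) <= (lam + 1) * (2 * d) by apply: Rmult_le_compat_l; lra.
have -> : 0 + 0 + (lam + 1) * ((2 * A - 2 * SA) / D) + (B - SB + lam * (A - SA)) / D
  = ((lam + 1) * (2 * A - 2 * SA) + (B - SB + lam * (A - SA))) * / D by field; lra.
have -> : 0 + eps = eps * D * / D by field; lra.
apply: Rmult_le_compat_r; first by left; apply: Rinv_0_lt_compat.
lra.
Qed.

Lemma big_sigT (I : finType) (T_ : I -> finType) (F : {i : I & T_ i} -> R) :
  \big[Rplus/0]_(s : {i : I & T_ i}) F s =
  \big[Rplus/0]_(i : I) \big[Rplus/0]_(x : T_ i) F (Tagged T_ x).
Proof.
have Ht := @tag_enumP I T_.
have Hm : forall x, x \in tag_enum T_.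
  move=> x; have : (0 < count_mem x (tag_enum T_))%N by rewrite Ht.
  by rewrite -has_count has_pred1.
have U : uniq (tag_enum T_).
  by apply: count_mem_uniq => x; rewrite Ht Hm.
have P : perm_eq (index_enum {i : I & T_ i}) (tag_enum T_).
  apply: uniq_perm => //; first exact: index_enum_uniq.
  by move=> x; rewrite mem_index_enum Hm.
rewrite (perm_big _ P) /tag_enum big_flatten /= big_map.
have P2 : perm_eq (index_enum I) (Finite.enum I).
  by rewrite [index_enum _]unlock.
rewrite -(perm_big _ P2); apply: eq_bigr => i _; rewrite big_map.
by rewrite [index_enum (T_ i)]unlock.
Qed.

Lemma iter_Rplus k c : iter k (Rplus c) 0 = INR k * c.
Proof. elim: k => [|k IH]; first by rewrite /= Rmult_0_l. rewrite iterS IH S_INR; ring. Qed.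

Lemma big_const_R (T : finType) (A : {pred T}) c :
  \big[Rplus/0]_(i in A) c = INR #|A| * c.
Proof. by rewrite big_const iter_Rplus. Qed.

Lemma sum_subsets n (H : nat -> R) :
  \big[Rplus/0]_(U : {set 'I_n}) H #|U| = sumr 0 n.+1 (fun k => INR 'C(n, k) * H k).
Proof.
rewrite (partition_big (fun U : {set 'I_n} => (inord #|U| : 'I_n.+1)) predT) //=.
rewrite /sumr big_mkord; apply: eq_bigr => j _.
have Hj : (j <= n)%N by have := ltn_ord j; lia.
rewrite (eq_big (fun U : {set 'I_n} => U \in [set U : {set 'I_n} | #|U| == j])
                 (fun _ => H j)).
- by rewrite big_const_R card_draws card_ord.
- move=> U; rewrite inE; apply/eqP/eqP => [<-|E].
    rewrite inordK //; have := max_card U; rewrite card_ord => Hc; exact: Hc.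
  by apply: val_inj; rewrite /= inordK E.
- move=> U /eqP <-; rewrite inordK //; have := max_card U; rewrite card_ord => Hc; exact: Hc.
Qed.

Lemma fact_pos k : 0 < INR k`!.
Proof. apply: lt_0_INR; have := fact_gt0 k; lia. Qed.

Lemma totw_nonneg F k : 0 <= totw F k.
Proof.
rewrite /totw; elim/big_rec: _ => [|i x _ Hx]; first lra.
have := wt_nonneg i; lra.
Qed.

Lemma coef_nonneg F k : 0 <= coef F k.
Proof.
rewrite /coef /Rdiv; apply: Rmult_le_pos; first exact: totw_nonneg.
left; apply: Rinv_0_lt_compat; exact: fact_pos.
Qed.

Lemma totw_coef F k : totw F k = coef F k * INR k`!.
Proof. rewrite /coef; have := fact_pos k; move=> P; field; lra. Qed.

Lemma sum_prodstr F G n (phi : nat -> R) :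
  \big[Rplus/0]_(s : prodstr F G n) (prodwt s * phi #|tag s|) =
  sumr 0 n.+1 (fun k => INR n`! * (coef F k * coef G (n - k)) * phi k).
Proof.
rewrite /prodstr big_sigT.
transitivity (\big[Rplus/0]_(U : {set 'I_n}) (totw F #|U| * totw G (n - #|U|) * phi #|U|)).
  apply: eq_bigr => U _.
  have -> : totw F #|U| * totw G (n - #|U|) * phi #|U| =
     \big[Rplus/0]_(i : 'I_(nstr F #|U|)) \big[Rplus/0]_(j : 'I_(nstr G (n - #|U|)))
        (wt i * wt j * phi #|U|).
    rewrite /totw big_distrl /= big_distrl /=; apply: eq_bigr => i _.
    rewrite big_distrr /= big_distrl /=; apply: eq_bigr => j _; ring.
  rewrite pair_big /=; apply: eq_bigr => x _; by rewrite /prodwt.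
rewrite (sum_subsets n (fun k => totw F k * totw G (n - k) * phi k)).
apply: sumr_ext => k Hk.
have Hkn : (k <= n)%N by lia.
have E := bin_fact Hkn.
have E' : INR n`! = INR 'C(n, k) * (INR k`! * INR (n - k)`!).
  by rewrite -E !mult_INR.
rewrite E' !totw_coef; ring.
Qed.

Lemma big_option (T : finType) (F : option T -> R) :
  \big[Rplus/0]_(x : option T) F x = F None + \big[Rplus/0]_(t : T) F (Some t).
Proof.
have U : uniq (None :: map Some (index_enum T)).
  rewrite /= map_inj_uniq ?index_enum_uniq //; last by move=> ? ? [].
  by rewrite andbT; apply/mapP => -[].
have P : perm_eq (index_enum (option T)) (None :: map Some (index_enum T)).
  apply: uniq_perm => //; first exact: index_enum_uniq.
  move=> [x|]; rewrite mem_index_enum in_cons //=.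
  by rewrite mem_map ?mem_index_enum // => ? ? [].
by rewrite (perm_big _ P) big_cons big_map.
Qed.

Lemma prod_totwE F G n :
  prod_totw F G n = INR n`! * sumr 0 n.+1 (fun k => coef F k * coef G (n - k)).
Proof.
have E := sum_prodstr F G n (fun _ => 1); rewrite /= in E.
rewrite /prod_totw (eq_bigr (fun s => prodwt s * 1)); last by move=> s _; ring.
rewrite E sumr_scal; apply: sumr_ext => k _; ring.
Qed.

Lemma prod_coefE F G n :
  prod_coef F G n = sumr 0 n.+1 (fun k => coef F k * coef G (n - k)).
Proof. rewrite /prod_coef prod_totwE; have := fact_pos n => P; field; lra. Qed.

Lemma conv_rho F G rho n :
  conv (fun k => coef F k * rho ^ k) (fun k => coef G k * rho ^ k) n =
  rho ^ n * sumr 0 n.+1 (fun k => coef F k * coef G (n - k)).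
Proof.
rewrite /conv sumr_scal; apply: sumr_ext => k Hk.
have -> : rho ^ n = rho ^ k * rho ^ (n - k) by rewrite -pow_add; congr (_ ^ _); lia.
ring.
Qed.

Definition Yk (F G : wspecies) (rho lam : R) (n k : nat) : R :=
  coin_p F G rho lam *
    (if Rlt_dec 0 (coef G (n - k)) then
       rho ^ k / (INR k`! * series_val (coef F) rho) * / INR 'C(n, k) * / totw G (n - k)
     else 0)
  + (1 - coin_p F G rho lam) *
    (if Rlt_dec 0 (coef F k) then
       rho ^ (n - k) / (INR (n - k)`! * series_val (coef G) rho) * / INR 'C(n, n - k)
       * / totw F k
     else 0).

Lemma law_hatS_someE F G rho lam n (s : prodstr F G n) :
  law_hatS_some rho lam s = prodwt s * Yk F G rho lam n #|tag s|.
Proof.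
rewrite /law_hatS_some /heads_prob /tails_prob /prodwt /Yk.
case: (Rlt_dec 0 (coef G (n - #|tag s|))) => ?;
case: (Rlt_dec 0 (coef F #|tag s|)) => ?; rewrite /Rdiv; cbn [is_left]; ring.
Qed.

Lemma prodwt_nonneg F G n (s : prodstr F G n) : 0 <= prodwt s.
Proof. rewrite /prodwt; apply: Rmult_le_pos; exact: wt_nonneg. Qed.

Lemma term_le F G rho lam n k :
  0 < rho -> 0 < series_val (coef G) rho -> 0 < series_val (coef F) rho -> 0 < lam ->
  (k <= n)%N -> 0 < sumr 0 n.+1 (fun k => coef F k * coef G (n - k)) ->
  INR n`! * (coef F k * coef G (n - k)) * Rabs (/ prod_totw F G n - Yk F G rho lam n k)
  <= Rabs (coef F k * rho ^ k * (coef G (n - k) * rho ^ (n - k)) /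
      conv (fun k => coef F k * rho ^ k) (fun k => coef G k * rho ^ k) n
      - (coef F k * rho ^ k + lam * (coef G (n - k) * rho ^ (n - k))) /
        (series_val (coef F) rho + lam * series_val (coef G) rho)).
Proof.
move=> Hr HA HB Hl Hk Hc.
have Hf := coef_nonneg F k; have Hg := coef_nonneg G (n - k).
have Hn := fact_pos n.
case: (Rle_lt_or_eq_dec _ _ Hf) => Hf'; last first.
  rewrite -Hf' Rmult_0_l Rmult_0_r Rmult_0_l; exact: Rabs_pos.
case: (Rle_lt_or_eq_dec _ _ Hg) => Hg'; last first.
  rewrite -Hg' Rmult_0_r Rmult_0_r Rmult_0_l; exact: Rabs_pos.
rewrite -(Rabs_pos_eq (INR n`! * (coef F k * coef G (n - k)))); last first.
  apply: Rmult_le_pos; [lra | apply: Rmult_le_pos; lra].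
rewrite -Rabs_mult; apply: Req_le; congr Rabs.
rewrite /Yk; case: Rlt_dec => [?|?]; last lra; case: Rlt_dec => [?|?]; last lra.
rewrite prod_totwE conv_rho /coin_p !totw_coef bin_sub //.
set A := series_val (coef G) rho; set B := series_val (coef F) rho.
set c := sumr 0 n.+1 _.
have E := bin_fact Hk.
have E' : INR n`! = INR 'C(n, k) * (INR k`! * INR (n - k)`!) by rewrite -E !mult_INR.
have Ck : 0 < INR 'C(n, k) by apply: lt_0_INR; have := bin_gt0 n k; lia.
have Hk1 := fact_pos k; have Hk2 := fact_pos (n - k).
have Er : rho ^ n = rho ^ k * rho ^ (n - k) by rewrite -pow_add; congr (_ ^ _); lia.
have Hrk : 0 < rho ^ k by apply: pow_lt.
have Hrnk : 0 < rho ^ (n - k) by apply: pow_lt.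
rewrite Er E'; cbn [is_left].
have HA' : 0 < A by []. have HB' : 0 < B by [].
have HD : 0 < B + lam * A by nra.
have Hcc : 0 < c by [].
field.
repeat split; try lra; try nra.
Qed.

Lemma dTV_le F G rho lam n :
  0 < rho -> 0 < series_val (coef G) rho -> 0 < series_val (coef F) rho -> 0 < lam ->
  0 < sumr 0 n.+1 (fun k => coef F k * coef G (n - k)) ->
  dTV (@law_S F G n) (law_hatS rho lam (n:=n)) <=
  sumr 0 n.+1 (fun k => Rabs (coef F k * rho ^ k * (coef G (n - k) * rho ^ (n - k)) /
      conv (fun k => coef F k * rho ^ k) (fun k => coef G k * rho ^ k) n
      - (coef F k * rho ^ k + lam * (coef G (n - k) * rho ^ (n - k))) /
        (series_val (coef F) rho + lam * series_val (coef G) rho))).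
Proof.
move=> Hr HA HB Hl Hc.
have Hn := fact_pos n.
have EPT := prod_totwE F G n.
set c := sumr 0 n.+1 _ in Hc EPT.
have HPT : 0 < prod_totw F G n by rewrite EPT; apply: Rmult_lt_0_compat.
set Y := Yk F G rho lam n.
set t := fun k => INR n`! * (coef F k * coef G (n - k)).
have Ht : forall k, 0 <= t k.
  move=> k; rewrite /t; apply: Rmult_le_pos; first lra.
  apply: Rmult_le_pos; exact: coef_nonneg.
have E1 : \big[Rplus/0]_(s : prodstr F G n) law_hatS_some rho lam s = sumr 0 n.+1 (fun k => t k * Y k).
  rewrite (eq_bigr _ (fun s _ => law_hatS_someE F G rho lam n s)); exact: sum_prodstr.
have E2 : \big[Rplus/0]_(s : prodstr F G n)
            Rabs (law_S (Some s) - law_hatS rho lam (Some s))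
          = sumr 0 n.+1 (fun k => t k * Rabs (/ prod_totw F G n - Y k)).
  rewrite -(sum_prodstr F G n (fun k => Rabs (/ prod_totw F G n - Y k))).
  apply: eq_bigr => s _; rewrite /= law_hatS_someE /Rdiv -Rmult_minus_distr_l Rabs_mult.
  by rewrite (Rabs_pos_eq _ (prodwt_nonneg F G n s)).
have E3 : 1 = sumr 0 n.+1 (fun k => t k * / prod_totw F G n).
  have St : sumr 0 n.+1 t = prod_totw F G n by rewrite EPT /t /c sumr_scal.
  rewrite (sumr_ext (fun k => / prod_totw F G n * t k)); last by move=> k _; ring.
  rewrite -sumr_scal St; field; lra.
rewrite /dTV big_option /= E1 E2.
have L1 : Rabs (0 - (1 - sumr 0 n.+1 (fun k => t k * Y k)))
          <= sumr 0 n.+1 (fun k => t k * Rabs (/ prod_totw F G n - Y k)).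
  rewrite {1}E3 -sumr_minus.
  have -> : 0 - sumr 0 n.+1 (fun k => t k * / prod_totw F G n - t k * Y k)
          = - sumr 0 n.+1 (fun k => t k * / prod_totw F G n - t k * Y k) by ring.
  rewrite Rabs_Ropp; apply: Rle_trans (sumr_abs _ _ _) _.
  apply: sumr_le => k _; rewrite -Rmult_minus_distr_l Rabs_mult Rabs_pos_eq //; lra.
have L2 : sumr 0 n.+1 (fun k => t k * Rabs (/ prod_totw F G n - Y k)) <=
  sumr 0 n.+1 (fun k => Rabs (coef F k * rho ^ k * (coef G (n - k) * rho ^ (n - k)) /
      conv (fun k => coef F k * rho ^ k) (fun k => coef G k * rho ^ k) n
      - (coef F k * rho ^ k + lam * (coef G (n - k) * rho ^ (n - k))) /
        (series_val (coef F) rho + lam * series_val (coef G) rho))).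
  apply: sumr_le => k Hk; rewrite /t /Y; apply: term_le => //; lia.
lra.
Qed.

Lemma ratio_bound (x y : nat -> R) lam :
  (exists N, forall n, (N <= n)%N -> 0 < y n) -> Un_cv (fun n => x n / y n) lam ->
  exists N, forall k, (N <= k)%N -> x k <= (lam + 1) * y k.
Proof.
move=> [Na HNa] Hba.
have [N1 HN1] := Hba 1 Rlt_0_1.
exists (maxn Na N1) => k Hk.
have P := HNa k ltac:(lia); have := HN1 k ltac:(lia); rewrite /R_dist => Q.
have Q' := Rabs_def2 _ _ Q.
have : x k / y k < lam + 1 by lra.
move=> R1; have := Rmult_lt_compat_r (y k) _ _ P R1.
rewrite /Rdiv Rmult_assoc Rinv_l; lra.
Qed.

Lemma inf_sum_cv s l : infinite_sum s l <-> Un_cv (fun n => sumr 0 n.+1 s) l.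
Proof.
split=> H.
  apply: (Un_cv_ext (fun n => sum_f_R0 s n)); first by move=> n; rewrite sumr_f_R0.
  exact: H.
have H' : Un_cv (fun n => sum_f_R0 s n) l.
  apply: (Un_cv_ext (fun n => sumr 0 n.+1 s)); first by move=> n; rewrite sumr_f_R0.
  exact: H.
exact: H'.
Qed.


Lemma series_valP a x l : infinite_sum (fun n => a n * x ^ n) l -> series_val a x = l.
Proof.
move=> H; have H2 : infinite_sum (fun n => a n * x ^ n) (series_val a x).
  rewrite /series_val; apply: epsilon_spec; by exists l.
exact: (uniqueness_sum _ _ _ H2 H).
Qed.

Lemma sumr_ge_term h n k : (forall j, 0 <= h j) -> (k <= n)%N -> h k <= sumr 0 n.+1 h.
Proof.
move=> H Hk; rewrite (sumr_split 0 k n.+1) //; last lia.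
rewrite (sumr_recl k); last lia.
have := @sumr_nonneg 0 k h (fun j _ => H j).
have := @sumr_nonneg k.+1 n.+1 h (fun j _ => H j).
lra.
Qed.

Lemma dTV_nonneg (T : finType) (P Q : T -> R) : 0 <= dTV P Q.
Proof.
rewrite /dTV; apply: Rmult_le_pos; first lra.
elim/big_rec: _ => [|i x _ Hx]; first lra.
have := Rabs_pos (P i - Q i); lra.
Qed.

Theorem proposition5 (F G : wspecies) (rho lambda : R) :
  (exists N : nat, forall n : nat, (N <= n)%nat -> 0 < coef F n) ->
  (exists N : nat, forall n : nat, (N <= n)%nat -> 0 < coef G n) ->
  0 < rho ->
  is_radius (coef G) rho ->
  Un_cv (fun n => coef G n / coef G (S n)) rho ->
  (exists l, infinite_sum (fun n => coef G n * rho ^ n) l) ->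
  Un_cv (fun n => sum_f_R0 (fun i => coef G i * coef G (n - i)%nat) n / coef G n)
        (2 * series_val (coef G) rho) ->
  0 < lambda ->
  Un_cv (fun n => coef F n / coef G n) lambda ->
  Un_cv (fun n => prod_coef F G n /
                  (series_val (coef F) rho * coef G n
                   + series_val (coef G) rho * coef F n)) 1
  /\ Un_cv (fun n => dTV (@law_S F G n) (law_hatS rho lambda (n:=n))) 0.
Proof.
move=> [NF HNF] [NG HNG] Hr _ Hratio [l Hl] Hconv0 Hlam Hfg.
set a := fun k => coef G k * rho ^ k.
set b := fun k => coef F k * rho ^ k.
set A := series_val (coef G) rho.
set B := series_val (coef F) rho.
have Hpow : forall k, 0 < rho ^ k by move=> k; apply: pow_lt.
have Ha0 : forall k, 0 <= a k.
  move=> k; rewrite /a; apply: Rmult_le_pos; [exact: coef_nonneg | have := Hpow k; lra].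
have Hb0 : forall k, 0 <= b k.
  move=> k; rewrite /b; apply: Rmult_le_pos; [exact: coef_nonneg | have := Hpow k; lra].
have Hapos : forall n, (NG <= n)%N -> 0 < a n.
  move=> n Hn; apply: Rmult_lt_0_compat; [exact: HNG | exact: Hpow].
have HA : Un_cv (fun n => sumr 0 n.+1 a) A.
  have E : A = l by exact: series_valP.
  rewrite E; apply/inf_sum_cv; exact: Hl.
have Hba : Un_cv (fun n => b n / a n) lambda.
  apply: (@cv_ev (fun n => coef F n / coef G n) _ _ NG) => // n Hn.
  have := HNG n Hn; have := Hpow n => P1 P2; rewrite /a /b; field; lra.
have [Nb HNb] := @ratio_bound b a lambda (ex_intro _ NG Hapos) Hba.
have HB : Un_cv (fun n => sumr 0 n.+1 b) B.
  have G1 : Un_growing (fun n => sumr 0 n.+1 b).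
    by move=> n; rewrite (sumr_recr 0 n.+1) //; have := Hb0 n.+1; lra.
  have G2 : has_ub (fun n => sumr 0 n.+1 b).
    exists (sumr 0 Nb b + (lambda + 1) * A) => x [i ->].
    have S0 := @sumr_nonneg 0 Nb b (fun j _ => Hb0 j).
    have AA := psum_le Ha0 HA 0; rewrite sumr_nil in AA.
    case: (leqP i.+1 Nb) => Hi.
      rewrite (sumr_split 0 i.+1 Nb) //.
      have := @sumr_nonneg i.+1 Nb b (fun j _ => Hb0 j).
      have : 0 <= (lambda + 1) * A by apply: Rmult_le_pos; lra.
      lra.
    rewrite (sumr_split 0 Nb i.+1) //; last lia.
    have S1 : sumr Nb i.+1 b <= (lambda + 1) * sumr Nb i.+1 a.
      rewrite sumr_scal; apply: sumr_le => k Hk; apply: HNb; lia.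
    have S2 := psum_mid Nb i.+1 Ha0 HA (ltnW Hi).
    have S3 := @sumr_nonneg 0 Nb a (fun j _ => Ha0 j).
    have : (lambda + 1) * sumr Nb i.+1 a <= (lambda + 1) * A.
      apply: Rmult_le_compat_l; lra.
    lra.
  have [lB HlB] := growing_cv _ G1 G2.
  have E : B = lB by apply: series_valP; apply/inf_sum_cv; exact: HlB.
  by rewrite E.
have Hrat : Un_cv (fun n => a n / a n.+1) 1.
  have -> : 1 = rho / rho by field; lra.
  apply: (@cv_ev (fun n => coef G n / coef G n.+1 / rho) _ _ NG).
    move=> n Hn; have := HNG n Hn; have := HNG n.+1 ltac:(lia); have := Hpow n => P1 P2 P3.
    rewrite /a; have -> : rho ^ n.+1 = rho * rho ^ n by [].
    field; repeat split; lra.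
  apply: cv_div => //; [exact: cv_const | lra].
have Hconv : Un_cv (fun n => conv a a n / a n) (2 * A).
  apply: (@cv_ev (fun n => sum_f_R0 (fun i => coef G i * coef G (n - i)%nat) n / coef G n) _ _ NG) => //.
  move=> n Hn; have := HNG n Hn; have := Hpow n => P1 P2.
  rewrite /a (conv_rho G G rho n) sumr_f_R0; field; lra.
have H : Hyp a b A B lambda by constructor => //; exists NG.
have HAp := A_pos H.
have HB0 := B_nonneg H.
have HBp : 0 < B.
  have := psum_le Hb0 HB NF.+1; rewrite (sumr_recr 0 NF) //.
  have := @sumr_nonneg 0 NF b (fun j _ => Hb0 j).
  have := HNF NF (leqnn NF); have := Hpow NF => P1 P2.
  have : 0 < b NF by rewrite /b; apply: Rmult_lt_0_compat.
  lra.
split.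
  have -> : 1 = (B + lambda * A) / (B + A * lambda) by field; nra.
  apply: (@cv_ev (fun n => (conv b a n / a n) / (B + A * (b n / a n))) _ _ (maxn NF NG)).
    move=> n Hn; have := HNG n ltac:(lia); have := HNF n ltac:(lia); have := Hpow n => P1 P2 P3.
    rewrite prod_coefE (conv_rho F G rho n) /a /b -/A -/B.
    have : 0 < B * coef G n + A * coef F n by nra.
    have : 0 < A * (coef F n * rho ^ n / (coef G n * rho ^ n)).
      apply: Rmult_lt_0_compat => //; apply: Rmult_lt_0_compat; first nra.
      apply: Rinv_0_lt_compat; nra.
    move=> P5 P4; field; repeat split; try lra; try nra.
  apply: cv_div; [exact: (conv_lim H) | | nra].
  apply: CV_plus; [exact: cv_const | exact: cv_scal].
apply: squeeze => eps He.
exists (fun _ => 0).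
exists (fun n => sumr 0 n.+1 (fun k => Rabs (b k * a (n - k)%N / conv b a n
                   - (b k + lambda * a (n - k)%N) / (B + lambda * A)))).
exists 0, 0, (NF + NG)%N.
split.
  move=> n Hn; split; first exact: dTV_nonneg.
  apply: dTV_le => //.
  have := @sumr_ge_term (fun k => coef F k * coef G (n - k)%N) n NF.
  have P : 0 < coef F NF * coef G (n - NF)%N.
    apply: Rmult_lt_0_compat; [exact: HNF | apply: HNG; lia].
  move=> Q; apply: Rlt_le_trans P (Q _ _) => //; last lia.
  move=> j; apply: Rmult_le_pos; exact: coef_nonneg.
split; first exact: cv_const.
split; first exact: (tv_lim H).
split; lra.
Qed.
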